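(* Let $G$ be a co-bipartite graph whose vertex set is partitioned into cliques $A$ and $B$ with $|A|=n_1$ and $|B|=n_2$. Suppose there is a numbering of the vertices, $A=\{1,\dots,n_1\}$ and $B=\{1',\dots,n_2'\}$, which satisfies the Bi-Consecutive Adjacency Property. Then $G$ is a circular arc graph.
   Context: A circular arc graph is the intersection graph of a finite family of arcs of a circle. Bi-Consecutive Adjacency Property: given a partition $V(G)=A\cup B$ with vertices of $A$ numbered $1,\dots,n_1$ and vertices of $B$ numbered $1',\dots,n_2'$, the numbering satisfies the property if for every $i\in A$ and $j'\in B$ with $i$ adjacent to $j'$, either (a) $j'$ is adjacent to every $k\in A$ with $1\le k\le i$, or (b) $i$ is adjacent to every $k'\in B$ with $1'\le k'\le j'$. *)

(* Defs.v *)
From mathcomp Require Import all_boot.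
From Stdlib Require Import Reals ZArith.
Set Implicit Arguments. Unset Strict Implicit. Unset Printing Implicit Defensive.

Definition simple_graph (V : finType) (adj : rel V) : Prop :=
  (forall u v, adj u v = adj v u) /\ (forall u, ~~ adj u u).

(* The circle is R/Z.  A (closed) arc is given by a start point s and a length
   l with 0 <= l <= 1 (l = 0: a single point, l = 1: the whole circle);
   a real x (representing a point of R/Z) lies on the arc iff some
   integer translate x + k lies in [s, s + l]. *)
Definition on_arc (arc : R * R) (x : R) : Prop :=
  exists k : Z, (arc.1 <= x + IZR k <= arc.1 + arc.2)%R.

Definition is_arc (arc : R * R) : Prop := (0 <= arc.2 <= 1)%R.

Definition arcs_meet (a1 a2 : R * R) : Prop :=
  exists x : R, on_arc a1 x /\ on_arc a2 x.

Definition circular_arc_graph (V : finType) (adj : rel V) : Prop :=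
  exists f : V -> R * R,
    (forall v, is_arc (f v)) /\
    (forall u v, u != v -> (adj u v <-> arcs_meet (f u) (f v))).

Definition clique (V : finType) (adj : rel V) (S : {set V}) : Prop :=
  forall u v, u \in S -> v \in S -> u != v -> adj u v.

(* Bi-Consecutive Adjacency Property for numberings a : 'I_n1 -> A and
   b : 'I_n2 -> B (indices shifted to start at 0). *)
Definition BCAP (V : finType) (adj : rel V) (n1 n2 : nat)
    (a : 'I_n1 -> V) (b : 'I_n2 -> V) : Prop :=
  forall (i : 'I_n1) (j : 'I_n2), adj (a i) (b j) ->
    (forall k : 'I_n1, k <= i -> adj (b j) (a k)) \/
    (forall k : 'I_n2, k <= j -> adj (a i) (b k)).

(* Main.v *)
Require Import Defs.
From mathcomp Require Import all_boot.
From Stdlib Require Import Reals ZArith Lra Lia.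

Lemma meet_ab (al be ga de : R) :
  (0 <= al < 1/2)%R -> (0 <= be < 1/2)%R -> (0 <= ga < 1/2)%R -> (0 <= de < 1/2)%R ->
  arcs_meet ((- al)%R, (al + be)%R) ((1/2 - ga)%R, (ga + de)%R) <->
  (1/2 <= be + ga \/ 1/2 <= al + de)%R.
Proof.
move=> Ha Hb Hg Hd; split.
- case=> x [[k1 H1] [k2 H2]]; simpl in *.
  have Hlo : (-1 < IZR (k2 - k1))%R by rewrite minus_IZR; lra.
  have Hhi : (IZR (k2 - k1) < 2)%R by rewrite minus_IZR; lra.
  apply lt_IZR in Hlo; apply lt_IZR in Hhi.
  have [E|E] : (k2 = k1 \/ k2 = k1 + 1)%Z by lia.
  + subst k2; lra.
  + subst k2; rewrite plus_IZR in H2; lra.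
- case=> H.
  + exists be; split; exists 0%Z; simpl; lra.
  + exists (- al)%R; split; [exists 0%Z | exists 1%Z]; simpl; lra.
Qed.

Lemma meet_aa (al be al' be' : R) :
  (0 <= al)%R -> (0 <= be)%R -> (0 <= al')%R -> (0 <= be')%R ->
  arcs_meet ((- al)%R, (al + be)%R) ((- al')%R, (al' + be')%R).
Proof. move=> *; exists 0%R; split; exists 0%Z; simpl; lra. Qed.

Lemma meet_bb (ga de ga' de' : R) :
  (0 <= ga)%R -> (0 <= de)%R -> (0 <= ga')%R -> (0 <= de')%R ->
  arcs_meet ((1/2 - ga)%R, (ga + de)%R) ((1/2 - ga')%R, (ga' + de')%R).
Proof. move=> *; exists (1/2)%R; split; exists 0%Z; simpl; lra. Qed.

Lemma meet_sym a1 a2 : arcs_meet a1 a2 -> arcs_meet a2 a1.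
Proof. by case=> x [H1 H2]; exists x. Qed.

Section S.
Variables (V : finType) (adj : rel V) (n1 n2 : nat) (a : 'I_n1 -> V) (b : 'I_n2 -> V).
Hypothesis sym : forall u v, adj u v = adj v u.
Hypothesis bc : BCAP adj a b.

Definition R1 (i : 'I_n1) (j : 'I_n2) := [forall k : 'I_n1, leq k i ==> adj (b j) (a k)].
Definition R2 (i : 'I_n1) (j : 'I_n2) := [forall k : 'I_n2, leq k j ==> adj (a i) (b k)].
Definition cc j := \max_(i : 'I_n1 | R1 i j) i.+1.
Definition dd i := \max_(j : 'I_n2 | R2 i j) j.+1.

Lemma R1P i j : R1 i j = (i < cc j).
Proof.
apply/idP/idP.
- move=> H; rewrite /cc; exact: (@leq_bigmax_cond _ (fun k => R1 k j) (fun k => (nat_of_ord k).+1) i H).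
- move=> H; apply/negPn/negP => Hn.
  have : cc j <= i.
    apply/bigmax_leqP => k Hk; rewrite ltnNge; apply/negP => Hik.
    apply: (negP Hn); apply/forallP => l; apply/implyP => Hl.
    by move/forallP: Hk => /(_ l) /implyP; apply; apply: leq_trans Hl Hik.
  by rewrite leqNgt H.
Qed.

Lemma R2P i j : R2 i j = (j < dd i).
Proof.
apply/idP/idP.
- move=> H; rewrite /dd; exact: (@leq_bigmax_cond _ (fun k => R2 i k) (fun k => (nat_of_ord k).+1) j H).
- move=> H; apply/negPn/negP => Hn.
  have : dd i <= j.
    apply/bigmax_leqP => k Hk; rewrite ltnNge; apply/negP => Hik.
    apply: (negP Hn); apply/forallP => l; apply/implyP => Hl.
    by move/forallP: Hk => /(_ l) /implyP; apply; apply: leq_trans Hl Hik.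
  by rewrite leqNgt H.
Qed.

Lemma cc_le j : cc j <= n1.
Proof. by apply/bigmax_leqP => i _; apply: ltn_ord. Qed.
Lemma dd_le i : dd i <= n2.
Proof. by apply/bigmax_leqP => j _; apply: ltn_ord. Qed.

Lemma adjR i j : adj (a i) (b j) = R1 i j || R2 i j.
Proof.
apply/idP/idP.
- move=> H; case: (bc i j H) => [H1|H2]; apply/orP; [left|right];
    apply/forallP => k; apply/implyP => Hk; [exact: H1 | exact: H2].
- case/orP => [/forallP /(_ i)|/forallP /(_ j)]; rewrite leqnn /=; last by [].
  by rewrite sym.
Qed.
Definition NN := (n1 + n2).+1.
Definition ee := (/ (8 * INR NN))%R.
Lemma ee_pos : (0 < ee)%R.
Proof. rewrite /ee /NN; apply Rinv_0_lt_compat; have := lt_0_INR (n1+n2).+1 (Nat.lt_0_succ _); lra. Qed.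

Lemma bnd m : m <= NN -> (0 <= INR m * ee <= 1/8)%R.
Proof.
move=> /leP H; have He := ee_pos; split.
- apply Rmult_le_pos; [apply pos_INR | lra].
- have : (INR m * ee <= INR NN * ee)%R by apply Rmult_le_compat_r; [lra | apply le_INR].
  have HN : (0 < INR NN)%R by apply lt_0_INR; rewrite /NN; lia.
  have -> : (INR NN * ee = 1/8)%R by rewrite /ee; field; lra.
  done.
Qed.

Lemma key p q : (1/2 <= 1/4 - INR p * ee + (1/4 + INR q * ee))%R <-> p <= q.
Proof.
have He := ee_pos; split => H.
- apply/leP; apply INR_le; apply Rnot_lt_le => Hl.
  have : (INR q * ee < INR p * ee)%R by apply Rmult_lt_compat_r.
  lra.
- have : (INR p * ee <= INR q * ee)%R by apply Rmult_le_compat_r; [lra | apply le_INR; apply/leP].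
  lra.
Qed.

Definition al i := (1/4 + INR (dd i) * ee)%R.
Definition be (i : 'I_n1) := (1/4 - INR i.+1 * ee)%R.
Definition ga j := (1/4 + INR (cc j) * ee)%R.
Definition de (j : 'I_n2) := (1/4 - INR j.+1 * ee)%R.
Definition fa i := ((- al i)%R, (al i + be i)%R).
Definition fb j := ((1/2 - ga j)%R, (ga j + de j)%R).

Lemma le_NN1 m : m <= n1 -> m <= NN.
Proof. by rewrite /NN => H; apply: leq_trans H (leq_trans (leq_addr n2 n1) (leqnSn _)). Qed.
Lemma le_NN2 m : m <= n2 -> m <= NN.
Proof. by rewrite /NN => H; apply: leq_trans H (leq_trans (leq_addl n1 n2) (leqnSn _)). Qed.

Lemma al_b i : (1/4 <= al i <= 3/8)%R.
Proof. have := bnd _ (le_NN2 _ (dd_le i)); rewrite /al; lra. Qed.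
Lemma ga_b j : (1/4 <= ga j <= 3/8)%R.
Proof. have := bnd _ (le_NN1 _ (cc_le j)); rewrite /ga; lra. Qed.
Lemma be_b (i : 'I_n1) : (1/8 <= be i <= 1/4)%R.
Proof. have := bnd _ (le_NN1 _ (ltn_ord i)); rewrite /be; lra. Qed.
Lemma de_b (j : 'I_n2) : (1/8 <= de j <= 1/4)%R.
Proof. have := bnd _ (le_NN2 _ (ltn_ord j)); rewrite /de; lra. Qed.

Lemma meet_fab i j : arcs_meet (fa i) (fb j) <-> adj (a i) (b j).
Proof.
have := al_b i; have := be_b i; have := ga_b j; have := de_b j => *.
rewrite /fa /fb meet_ab; try lra.
rewrite adjR R1P R2P /be /de /al /ga; split.
- case=> H; apply/orP; [left|right]; apply/key; lra.
- case/orP => H; [left|right]; move/key: H; lra.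
Qed.

Variables (A B : {set V}).
Hypothesis irr : forall u, ~~ adj u u.
Hypothesis dis : A :&: B = set0.
Hypothesis cov : A :|: B = [set: V].
Hypothesis cA : clique adj A.
Hypothesis cB : clique adj B.
Hypothesis nA : #|A| = n1.
Hypothesis nB : #|B| = n2.
Hypothesis ia : injective a.
Hypothesis aA : forall i, a i \in A.
Hypothesis ib : injective b.
Hypothesis bB : forall j, b j \in B.

Lemma surjA v : v \in A -> exists i, a i = v.
Proof.
move=> Hv.
have Hs : [set a i | i in 'I_n1] \subset A by apply/subsetP => x /imsetP [i _ ->].
have : [set a i | i in 'I_n1] == A.
  rewrite eqEcard Hs /=.
  rewrite card_imset; last exact: ia.
  by rewrite card_ord nA.
by move/eqP => E; move: Hv; rewrite -E => /imsetP [i _ ->]; exists i.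
Qed.
Lemma surjB v : v \in B -> exists j, b j = v.
Proof.
move=> Hv.
have Hs : [set b i | i in 'I_n2] \subset B by apply/subsetP => x /imsetP [i _ ->].
have : [set b i | i in 'I_n2] == B.
  rewrite eqEcard Hs /=.
  rewrite card_imset; last exact: ib.
  by rewrite card_ord nB.
by move/eqP => E; move: Hv; rewrite -E => /imsetP [i _ ->]; exists i.
Qed.

Definition ff v : R * R :=
  match [pick i | a i == v] with
  | Some i => fa i
  | None => match [pick j | b j == v] with Some j => fb j | None => (0%R, 0%R) end
  end.

Lemma classify v : (exists i, a i = v /\ ff v = fa i) \/ (exists j, b j = v /\ ff v = fb j).
Proof.
rewrite /ff; case: pickP => [i /eqP Hi | Hn]; first by left; exists i.
case: pickP => [j /eqP Hj | Hm]; first by right; exists j.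
exfalso.
have : v \in A :|: B by rewrite cov inE.
case/setUP => [/surjA [i Hi] | /surjB [j Hj]].
- by move: (Hn i); rewrite Hi eqxx.
- by move: (Hm j); rewrite Hj eqxx.
Qed.

Lemma main : circular_arc_graph adj.
Proof.
exists ff; split.
- move=> v; case: (classify v) => [[i [_ ->]]|[j [_ ->]]]; rewrite /is_arc /fa /fb /=.
  + have := al_b i; have := be_b i; lra.
  + have := ga_b j; have := de_b j; lra.
- move=> u v.
  case: (classify u) => [[i [<- ->]]|[j [<- ->]]];
  case: (classify v) => [[i' [Ev ->]]|[j' [Ev ->]]]; subst v => Huv.
  + split => _; last (apply: cA; [exact: aA | exact: aA | exact: Huv]).
    have := al_b i; have := be_b i; have := al_b i'; have := be_b i' => *.
    apply: meet_aa; lra.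
  + by rewrite meet_fab.
  + rewrite sym -meet_fab; split; [apply: meet_sym | apply: meet_sym].
  + split => _; last (apply: cB; [exact: bB | exact: bB | exact: Huv]).
    have := ga_b j; have := de_b j; have := ga_b j'; have := de_b j' => *.
    apply: meet_bb; lra.
Qed.
End S.

Theorem lemma3 (V : finType) (adj : rel V) (A B : {set V})
    (n1 n2 : nat) (a : 'I_n1 -> V) (b : 'I_n2 -> V) :
  simple_graph adj ->
  A :&: B = set0 -> A :|: B = [set: V] ->
  clique adj A -> clique adj B ->
  #|A| = n1 -> #|B| = n2 ->
  injective a -> (forall i, a i \in A) ->
  injective b -> (forall j, b j \in B) ->
  BCAP adj a b ->
  circular_arc_graph adj.
Proof.
move=> [sym irr] dis cov cA cB nA nB ia aA ib bB bc.
exact: (@main V adj n1 n2 a b sym bc A B cov cA cB nA nB ia aA ib bB).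
Qed.
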